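(* Fix any configuration of open and closed sites on $\mathcal{L}$. Then for every $n\ge 1$, $$\xi_n=\overline{\xi}_n\cap[\ell_n,\infty).$$ Moreover, if $\xi_n\neq\emptyset$ then $u_n=\overline{u}_n$.
   Context: Let $\mathcal{L}=\{(n,m)\in\mathbb{Z}^2:n\ge0,\ n+m\text{ even}\}$. Each site of $\mathcal{L}$ is open or closed. For $z,z'\in\mathcal{L}$ write $z\to z'$ if there exist $k\ge0$ and sites $z=z_0,\dots,z_k=z'$ of $\mathcal{L}$ such that $z_0,\dots,z_{k-1}$ are open and $z_{i+1}-z_i\in\{(1,1),(2,0),(1,-1)\}$ for every $i$. Let $o=(0,0)$. Use the conventions $\sup\emptyset=-\infty$ and $\inf\emptyset=+\infty$. Define $\xi_n=\{x:o\to(n,x)\}$, $u_n=\sup\xi_n$ and $\ell_n=\inf\xi_n$. For $n\ge1$, let $$\overline{\xi}_n=\{x:\exists y\le0\text{ such that }(0,y)\to(n,x)\text{ or }(1,y)\to(n,x)\},$$ where only sites of $\mathcal{L}$ are considered, and let $\overline{u}_n=\sup\overline{\xi}_n$. *)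

(* Defs.v *)
From HB Require Import structures.
From mathcomp Require Import all_boot all_order all_algebra.
From mathcomp Require Import all_classical all_reals ereal.
From mathcomp Require Import Rstruct.

Set Implicit Arguments. Unset Strict Implicit. Unset Printing Implicit Defensive.
Import Order.TTheory GRing.Theory Num.Theory.
Local Open Scope ring_scope.
Local Open Scope classical_set_scope.

Definition site := (int * int)%type.

Definition in_L (z : site) : bool := (0 <= z.1) && ((z.1 + z.2) \in dvdz 2).

Definition is_step (z w : site) : bool :=
  [|| w == (z.1 + 1, z.2 + 1), w == (z.1 + 2, z.2) | w == (z.1 + 1, z.2 - 1)].

Inductive reach (open : site -> bool) : site -> site -> Prop :=
| reach0 z : in_L z -> reach open z z
| reachS z w z' : in_L z -> open z -> is_step z w -> reach open w z' ->
    reach open z z'.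

Definition xi (open : site -> bool) (n : nat) : set int :=
  [set x | reach open (0, 0) (n%:Z, x)].

Definition xibar (open : site -> bool) (n : nat) : set int :=
  [set x | exists y : int, y <= 0 /\
     (reach open (0, y) (n%:Z, x) \/ reach open (1, y) (n%:Z, x))].

Definition extZ (S : set int) : set (\bar Rdefinitions.R) := [set ((x%:~R : Rdefinitions.R)%:E) | x in S].

(* sup / inf in the extended reals: sup set0 = -oo, inf set0 = +oo *)
Definition u_ (open : site -> bool) (n : nat) : \bar Rdefinitions.R := ereal_sup (extZ (xi open n)).
Definition l_ (open : site -> bool) (n : nat) : \bar Rdefinitions.R := ereal_inf (extZ (xi open n)).
Definition ubar_ (open : site -> bool) (n : nat) : \bar Rdefinitions.R :=
  ereal_sup (extZ (xibar open n)).

(* Main.v *)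
Require Import Defs.
From HB Require Import structures.
From mathcomp Require Import all_boot all_order all_algebra.
From mathcomp Require Import all_classical all_reals ereal.
From mathcomp Require Import Rstruct.
From mathcomp Require Import zify.

Set Implicit Arguments. Unset Strict Implicit.
Import Order.TTheory GRing.Theory Num.Theory.
Local Open Scope ring_scope.
Local Open Scope classical_set_scope.

Section Comb.
Variable open : site -> bool.

Lemma step_cases z w : is_step z w ->
  (w.1 = z.1 + 1 /\ w.2 = z.2 + 1) \/ (w.1 = z.1 + 2 /\ w.2 = z.2) \/
  (w.1 = z.1 + 1 /\ w.2 = z.2 - 1).
Proof. by rewrite /is_step => /or3P [] /eqP ->; tauto. Qed.

Lemma reach_inL z z' : reach open z z' -> in_L z.
Proof. by case. Qed.

Lemma reach_inL_end z z' : reach open z z' -> in_L z'.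
Proof. by elim. Qed.

Lemma reach_time z z' : reach open z z' -> z.1 <= z'.1.
Proof.
elim=> [//|z1 w z'' _ _ st _ IH].
move: (step_cases st) => H; lia.
Qed.

Lemma reach_trans a b c : reach open a b -> reach open b c -> reach open a c.
Proof.
elim=> [//|z w z' Lz oz st _ IH] H.
exact: (reachS Lz oz st (IH H)).
Qed.

Lemma reach_step a b c : reach open a b -> open b -> is_step b c -> in_L c ->
  reach open a c.
Proof.
move=> Hab ob st Lc.
exact: (reach_trans Hab (reachS (reach_inL_end Hab) ob st (@reach0 open c Lc))).
Qed.

Lemma parity (z w : site) : in_L z -> in_L w -> z.1 = w.1 -> w.2 <= z.2 -> z <> w ->
  w.2 <= z.2 - 2.
Proof.
case: z w => [t a] [t' b] /=.
rewrite /in_L /= => /andP [_ /dvdzP [p Hp]] /andP [_ /dvdzP [q Hq]] H0 H1 H2.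
have H3 : b <> a by move=> E; apply: H2; rewrite H0 E.
lia.
Qed.

Lemma cross n l x : l <= x ->
  forall w z', reach open w z' -> z' = (n, x) ->
  forall g, reach open (0, 0) g -> reach open g (n, l) ->
  w.2 <= g.2 - (g.1 - w.1) -> w.2 <= g.2 - (w.1 - g.1) ->
  reach open (0, 0) (n, x).
Proof.
move=> hlx w z' Hw; elim: Hw.
- move=> w0 Lw -> g Hg Hgl.
  have : forall g0 z0, reach open g0 z0 -> z0 = (n, l) -> reach open (0,0) g0 ->
    (n, x).2 <= g0.2 - (g0.1 - (n, x).1) -> (n, x).2 <= g0.2 - ((n, x).1 - g0.1) ->
    reach open (0, 0) (n, x); last by apply; [exact: Hgl| |exact: Hg].
  move=> g0 z0 H; elim: H => {g0 z0}.
  + move=> g0 Lg -> Hg0 /= c1 c2.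
    have -> : x = l by lia.
    exact: Hg0.
  + move=> g0 g1 z0 Lg og st Hg1 IH Ez Hg0 /= c1 c2.
    have T := reach_time Hg1; rewrite Ez /= in T.
    move: (step_cases st) => S.
    apply: IH => //=; [exact: reach_step Hg0 og st (reach_inL Hg1)|lia|lia].
- move=> w0 w1 z0 Lw ow stw Hw1 IHw Ez g Hg Hgl.
  have Tw := reach_time Hw1; rewrite Ez /= in Tw.
  have Sw := step_cases stw.
  have : forall g0 z1, reach open g0 z1 -> z1 = (n, l) -> reach open (0,0) g0 ->
    w0.2 <= g0.2 - (g0.1 - w0.1) -> w0.2 <= g0.2 - (w0.1 - g0.1) ->
    reach open (0, 0) (n, x); last by apply; [exact: Hgl| |exact: Hg].
  move=> g0 z1 H; elim: H => {g0 z1}.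
  + move=> g0 Lg Eg Hg0 c1 c2.
    have [E|ne] := eqVneq g0 w0.
      rewrite E in Hg0; rewrite -Ez; exact: reach_trans Hg0 (reachS Lw ow stw Hw1).
    case: (leP w0.1 g0.1) => hle.
      have P : g0.1 = w0.1 -> w0.2 <= g0.2 - 2.
        move=> E; apply: (parity Lg Lw E); [lia | by move=> E'; rewrite E' eqxx in ne].
      apply: (IHw Ez g0 Hg0); [by rewrite -Eg; exact: reach0 | have := P; lia | have := P; lia].
    rewrite Eg /= in hle; lia.
  + move=> g0 g1 z1 Lg og st Hg1 IH Ez1 Hg0 c1 c2.
    have [E|ne] := eqVneq g0 w0.
      rewrite E in Hg0; rewrite -Ez; exact: reach_trans Hg0 (reachS Lw ow stw Hw1).
    have Tg := reach_time Hg1; rewrite Ez1 /= in Tg.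
    have S := step_cases st.
    case: (leP w0.1 g0.1) => hle.
      have P : g0.1 = w0.1 -> w0.2 <= g0.2 - 2.
        move=> E; apply: (parity Lg Lw E); [lia | by move=> E'; rewrite E' eqxx in ne].
      apply: (IHw Ez g0 Hg0); [rewrite -Ez1; exact: (reachS Lg og st Hg1) | have := P; lia | have := P; lia].
    apply: IH => //; [exact: reach_step Hg0 og st (reach_inL Hg1)|lia|lia].
Qed.
End Comb.

Lemma xi_sub_xibar (open : site -> bool) (n : nat) : xi open n `<=` xibar open n.
Proof. by move=> x hx; exists 0; split => //; left. Qed.

Lemma l_le (open : site -> bool) (n : nat) x : xi open n x ->
  (l_ open n <= ((x%:~R : Rdefinitions.R)%:E))%E.
Proof. by move=> hx; apply: ereal_inf_lbound; exists x. Qed.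

Lemma back (open : site -> bool) (n : nat) x : xibar open n x ->
  (l_ open n <= ((x%:~R : Rdefinitions.R)%:E))%E -> xi open n x.
Proof.
move=> [y [hy Hr]] hl.
have : (l_ open n < (((x + 1)%:~R : Rdefinitions.R)%:E))%E.
  apply: (le_lt_trans hl); rewrite lte_fin ltr_int; lia.
case/ereal_inf_lt => _ [z hz <-]; rewrite lte_fin ltr_int => hzx.
have hzx' : z <= x by lia.
have L00 : in_L (0, 0) by [].
rewrite /xi /=.
case: Hr => Hr.
- apply: (cross hzx' Hr erefl (reach0 open L00) hz) => /=; lia.
- case/andP: (reach_inL Hr) => _ /dvdzP [p Hp]; simpl in Hp.
  apply: (cross hzx' Hr erefl (reach0 open L00) hz) => /=; lia.
Qed.

Theorem mainTheorem4 (open : site -> bool) (n : nat) :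
  (1 <= n)%N ->
  xi open n = [set x | xibar open n x /\ (l_ open n <= ((x%:~R : Rdefinitions.R)%:E))%E] /\
  (xi open n !=set0 -> u_ open n = ubar_ open n).
Proof.
move=> _; split.
  apply/seteqP; split => x.
    by move=> hx; split; [exact: xi_sub_xibar | exact: l_le].
  by move=> [h1 h2]; exact: back.
move=> [a ha]; apply/eqP; rewrite eq_le; apply/andP; split.
  apply: le_ereal_sup => _ [z hz <-]; exists z => //; exact: xi_sub_xibar.
apply: ge_ereal_sup => _ [z hz <-].
have [hl|hl] := leP (l_ open n) ((z%:~R : Rdefinitions.R)%:E).
  by apply: ereal_sup_ubound; exists z => //; exact: back.
apply: (le_trans (ltW hl)); apply: (le_trans (l_le ha)).
by apply: ereal_sup_ubound; exists a.
Qed.
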